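(* For $i=1,\dots,m$ let $k_i$ be a positive integer, $\mu_i>0$, $\alpha_i\neq 0$ a real constant, and $\bar x_i$ a real number. Define $\mathcal U_i(p_i)=1-\alpha_i p_i$ on the interval $P_i=\{p_i\in\mathbb R: \mathcal U_i(p_i)\in(0,1)\}$. For $u\in(0,1)$ let $f_i(u)$ denote the unique positive real root $y$ of $$F_i(y,u)=\sum_{j=0}^{k_i}\frac{1}{\mu_i^{j-1}}\left[\frac{j-uk_i}{j!}\right]y^{j}=0,$$ and, writing $y=f_i(u)$, $\rho=y/\mu_i$, $\pi_0=\left[\sum_{j=0}^{k_i}\rho^j/j!\right]^{-1}$ and $\pi_{k_i}=\pi_0\rho^{k_i}/k_i!$, define the rejection rate $g_i(p_i)=f_i(\mathcal U_i(p_i))\cdot \pi_{k_i}$ for $p_i\in P_i$. Then the optimization problem $$\text{maximize}_{\mathbf p}\ \ \mathcal U(\mathbf p)\quad\text{subject to}\quad g_i(p_i)\le \bar x_i,\ i=1,\dots,m,$$ where $\mathcal U(\mathbf p)=(\mathcal U_1(p_1),\dots,\mathcal U_m(p_m))$ and $\mathbf p=(p_1,\dots,p_m)\in P_1\times\cdots\times P_m$, is a convex optimization problem; that is, the objective is affine (hence concave) in $\mathbf p$ and each constraint function $g_i$ is convex in $p_i$ on $P_i$.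
   Context: Each block-face $i$ is modeled as a multi-server loss queue with $k_i$ servers (parking spaces), per-server service rate $\mu_i$, total arrival rate $y$, and stationary probabilities $\pi_j=\pi_0\rho^j/j!$ ($j=0,\dots,k_i$) of $j$ busy servers, where $\rho=y/\mu_i$. The occupancy is $u=\frac{y}{k_i\mu_i}(1-\pi_{k_i})$; for $u\in(0,1)$ the total arrival rate $y$ producing occupancy $u$ is the unique positive root $f_i(u)$ of $F_i(y,u)=0$. Price $p_i$ determines occupancy through the linear demand model $\mathcal U_i(p_i)=1-\alpha_i p_i$, and $g_i(p_i)$ is the rate at which vehicles are rejected by (find no space at) block-face $i$. *)

(* Defs.v *)
From Stdlib Require Import Arith Reals Lra ClassicalEpsilon.
Open Scope R_scope.

Definition Fpoly (k : nat) (mu y u : R) : R :=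
  sum_f_R0 (fun j => / powerRZ mu (Z.of_nat j - 1)
                     * ((INR j - u * INR k) / INR (fact j)) * y ^ j) k.

Definition froot (k : nat) (mu u : R) : R :=
  epsilon (inhabits 0) (fun y => 0 < y /\ Fpoly k mu y u = 0).

Definition Udem (alpha p : R) : R := 1 - alpha * p.

Definition Pdom (alpha p : R) : Prop := 0 < Udem alpha p < 1.

Definition pi0 (k : nat) (rho : R) : R :=
  / sum_f_R0 (fun j => rho ^ j / INR (fact j)) k.
Definition pik (k : nat) (rho : R) : R :=
  pi0 k rho * rho ^ k / INR (fact k).

Definition grej (k : nat) (mu alpha p : R) : R :=
  let y := froot k mu (Udem alpha p) in
  y * pik k (y / mu).

Definition convex_set (D : R -> Prop) : Prop :=
  forall x y t, D x -> D y -> 0 <= t <= 1 -> D (t * x + (1 - t) * y).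

Definition convex_on (D : R -> Prop) (g : R -> R) : Prop :=
  forall x y t, D x -> D y -> 0 <= t <= 1 ->
    g (t * x + (1 - t) * y) <= t * g x + (1 - t) * g y.

(* Main.v *)
Require Import Defs.
From Stdlib Require Import Arith Reals Lra Lia Psatz ZArith ClassicalEpsilon.
Open Scope R_scope.

Definition Ssum (k:nat) (r:R) := sum_f_R0 (fun j => r ^ j / INR (fact j)) k.
Definition wk (k:nat) (r:R) := r ^ k / INR (fact k).
Definition eb k r := wk k r / Ssum k r.
Definition carr k r := r - r * eb k r.
Definition Dd k r := INR k - r + r * eb k r.
Definition Gd k r := 1 - eb k r - eb k r * Dd k r.

Lemma fact_pos' n : 0 < INR (fact n).
Proof. apply lt_0_INR, lt_O_fact. Qed.

Lemma S_succ n r : Ssum (S n) r = Ssum n r + wk (S n) r.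
Proof. reflexivity. Qed.

Lemma w_succ n r : wk (S n) r = r * wk n r / INR (S n).
Proof.
  unfold wk. rewrite fact_simpl, mult_INR. simpl pow.
  pose proof (fact_pos' n). assert (0 < INR (S n)) by (apply lt_0_INR; lia).
  field. lra.
Qed.

Lemma w_nonneg n r : 0 <= r -> 0 <= wk n r.
Proof. intros. unfold wk. pose proof (fact_pos' n).
  apply Rmult_le_pos; [apply pow_le; lra | left; apply Rinv_0_lt_compat; lra]. Qed.

Lemma w_pos n r : 0 < r -> 0 < wk n r.
Proof. intros. unfold wk. pose proof (fact_pos' n).
  apply Rmult_lt_0_compat; [apply pow_lt; lra | apply Rinv_0_lt_compat; lra]. Qed.

Lemma S_ge1 n r : 0 <= r -> 1 <= Ssum n r.
Proof. intros Hr. induction n.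
  - unfold Ssum; simpl. lra.
  - rewrite S_succ. pose proof (w_nonneg (S n) r Hr). lra.
Qed.

Lemma S_ge_w n r : 0 <= r -> wk n r <= Ssum n r.
Proof. intros Hr. destruct n.
  - unfold Ssum, wk; simpl. lra.
  - rewrite S_succ. pose proof (S_ge1 n r Hr). lra.
Qed.

Lemma dl_eq f x l l' : derivable_pt_lim f x l -> l = l' -> derivable_pt_lim f x l'.
Proof. intros H ->. exact H. Qed.

Lemma der_w n r : r <> 0 -> derivable_pt_lim (wk n) r (INR n / r * wk n r).
Proof.
  intros Hr. unfold wk. pose proof (fact_pos' n).
  eapply dl_eq.
  - apply (derivable_pt_lim_mult (fun y => y ^ n) (fun _ => / INR (fact n))).
    + apply derivable_pt_lim_pow.
    + apply derivable_pt_lim_const.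
  - destruct n.
    + simpl. field. lra.
    + simpl pred. simpl pow. field. lra.
Qed.

Lemma der_S n r : derivable_pt_lim (Ssum n) r (Ssum n r - wk n r).
Proof.
  induction n.
  - unfold Ssum, wk. simpl.
    eapply dl_eq. apply (derivable_pt_lim_const (1/1)). lra.
  - eapply dl_eq.
    + apply (derivable_pt_lim_plus (Ssum n) (wk (S n))). exact IHn.
      unfold wk. pose proof (fact_pos' (S n)).
      apply (derivable_pt_lim_mult (fun y => y ^ S n) (fun _ => / INR (fact (S n)))).
      apply derivable_pt_lim_pow. apply derivable_pt_lim_const.
    + rewrite S_succ. unfold wk. simpl pred. rewrite fact_simpl, mult_INR.
      pose proof (fact_pos' n). assert (0 < INR (S n)) by (apply lt_0_INR; lia).
      field. lra.
Qed.

Lemma der_b n r : 0 < r -> derivable_pt_lim (eb n) r (eb n r * (INR n / r - 1 + eb n r)).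
Proof.
  intros Hr. unfold eb. pose proof (S_ge1 n r ltac:(lra)).
  eapply dl_eq.
  - apply (derivable_pt_lim_div (wk n) (Ssum n)). apply der_w; lra. apply der_S. lra.
  - unfold Rsqr. field. lra.
Qed.

Lemma der_c n r : 0 < r -> derivable_pt_lim (carr n) r (Gd n r).
Proof.
  intros Hr. unfold carr, Gd, Dd.
  eapply dl_eq.
  - apply (derivable_pt_lim_minus id (fun y => y * eb n y)). apply derivable_pt_lim_id.
    apply (derivable_pt_lim_mult id (eb n)). apply derivable_pt_lim_id. apply der_b; lra.
  - unfold id. field. lra.
Qed.

Lemma der_G n r : 0 < r -> derivable_pt_lim (Gd n) r
   (- eb n r / r * (Dd n r * Dd n r + 2 * Dd n r + r * eb n r * Dd n r - INR n)).
Proof.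
  intros Hr. unfold Gd, Dd.
  eapply dl_eq.
  - apply (derivable_pt_lim_minus (fun y => 1 - eb n y) (fun y => eb n y * (INR n - y + y * eb n y))).
    apply (derivable_pt_lim_minus (fct_cte 1) (eb n)). apply derivable_pt_lim_const. apply der_b; lra.
    apply (derivable_pt_lim_mult (eb n) (fun y => INR n - y + y * eb n y)). apply der_b; lra.
    apply (derivable_pt_lim_plus (fun y => INR n - y) (fun y => y * eb n y)).
    apply (derivable_pt_lim_minus (fct_cte (INR n)) id). apply derivable_pt_lim_const. apply derivable_pt_lim_id.
    apply (derivable_pt_lim_mult id (eb n)). apply derivable_pt_lim_id. apply der_b; lra.
  - unfold id. field. lra.
Qed.

Lemma b_succ n r : 0 < r -> eb (S n) r = r * eb n r / (INR (S n) + r * eb n r).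
Proof.
  intros Hr. unfold eb. rewrite S_succ, w_succ.
  pose proof (S_ge1 n r ltac:(lra)). pose proof (w_pos n r Hr).
  assert (0 < INR (S n)) by (apply lt_0_INR; lia).
  field. split. lra. split. 2: lra. nra.
Qed.

Lemma Ealg (k d x r : R) : 0 <= d -> 0 < x -> d + 1 <= k -> d * (d + 2 + x) >= k - 1 ->
  r = k - 1 + x - d ->
  (d + 1) * (k * d + 3 * k + 2 * x + r * x) - (k + x) * (k + x) >= 0.
Proof.
  intros Hd Hx Hk H Hr. subst r.
  set (E := (d + 1) * (k * d + 3 * k + 2 * x + (k - 1 + x - d) * x) - (k + x) * (k + x)).
  set (a := d + 1). set (Bk := d*d + 2*d + x*d + 1).
  set (la := d*d*d + 4*d*d + 5*d + 2 + x*x*d). set (lB := 2*(d+1)*(d+1)*(d+1)).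
  assert (Heq : (Bk - a) * E = (Bk-a)*(k-a)*(Bk-k) + (Bk-k)*la + (k-a)*lB)
    by (unfold E, a, Bk, la, lB; ring).
  assert (Hla : 0 <= la) by (unfold la; nra).
  assert (HlB : 0 <= lB) by (unfold lB; nra).
  assert (HkB : k <= Bk) by (unfold Bk; nra).
  assert (Hka : a <= k) by (unfold a; lra).
  destruct (Rle_lt_or_eq_dec 0 d Hd) as [Hdp|Hd0].
  - assert (HBa : 0 < Bk - a) by (unfold Bk, a; nra).
    assert (0 <= (Bk - a) * E).
    { rewrite Heq. apply Rplus_le_le_0_compat. apply Rplus_le_le_0_compat.
      apply Rmult_le_pos. apply Rmult_le_pos; lra. lra.
      apply Rmult_le_pos; lra. apply Rmult_le_pos; lra. }
    apply Rle_ge. apply (Rmult_le_reg_l (Bk - a)). lra. lra.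
  - subst d. unfold Bk, a in *. assert (k = 1) by lra. subst k. unfold E. nra.
Qed.

Lemma key r : 0 < r -> forall n,
  0 < eb n r <= 1 /\ 0 <= Dd n r <= INR n /\
  Dd n r * (Dd n r + 2 + r * eb n r) >= INR n /\
  eb n r * (INR n + r) <= r /\ ((0 < n)%nat -> 0 < Dd n r).
Proof.
  intros Hr n. induction n as [|n IH].
  - assert (eb 0 r = 1) by (unfold eb, wk, Ssum; simpl; field).
    unfold Dd. rewrite H. simpl. repeat split; try lra. intros; lia.
  - destruct IH as [[Hb1 Hb2] [[Hd1 Hd2] [Hq [Hu _]]]].
    set (b := eb n r) in *. set (d := Dd n r) in *.
    set (x := r * b) in *. set (k := INR (S n)).
    assert (Hk : k = INR n + 1) by (unfold k; rewrite S_INR; reflexivity).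
    assert (Hx : 0 < x) by (unfold x; nra).
    assert (Hxr : x <= r) by (unfold x; nra).
    assert (Hn0 : 0 <= INR n) by apply pos_INR.
    assert (Hdr : d = INR n - r + x) by reflexivity.
    assert (Hb' : eb (S n) r = x / (k + x)) by (rewrite b_succ; auto).
    assert (HD' : Dd (S n) r = k * (d + 1) / (k + x)).
    { unfold Dd. fold k. rewrite Hb'. rewrite Hdr. rewrite Hk. field. lra. }
    rewrite HD', Hb'. fold k.
    assert (Hkx : 0 < k + x) by lra.
    repeat split.
    + apply Rdiv_lt_0_compat; lra.
    + apply Rmult_le_reg_r with (k + x). lra. unfold Rdiv. rewrite Rmult_assoc, Rinv_l; lra.
    + unfold Rdiv; apply Rmult_le_pos; [nra | left; apply Rinv_0_lt_compat; lra].
    + apply Rmult_le_reg_r with (k + x). lra. unfold Rdiv. rewrite Rmult_assoc, Rinv_l; nra.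
    + pose proof (Ealg k d x r Hd1 Hx ltac:(lra) ltac:(lra) ltac:(lra)) as HE.
      assert (Heq : k * (d + 1) / (k + x) * (k * (d + 1) / (k + x) + 2 + r * (x / (k + x))) - k
         = k * ((d + 1) * (k * d + 3 * k + 2 * x + r * x) - (k + x) * (k + x)) / ((k + x) * (k + x)))
        by (field; lra).
      apply Rminus_ge. rewrite Heq. apply Rle_ge. unfold Rdiv; apply Rmult_le_pos; [nra | left; apply Rinv_0_lt_compat; nra].
    + replace (x / (k + x) * (k + r)) with (x * (k + r) / (k + x)) by (field; lra).
      apply Rmult_le_reg_r with (k + x). lra. unfold Rdiv. rewrite Rmult_assoc, Rinv_l; nra.
    + intros _. apply Rdiv_lt_0_compat; nra.
Qed.

Definition Gd' n r := - eb n r / r * (Dd n r * Dd n r + 2 * Dd n r + r * eb n r * Dd n r - INR n).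


Lemma Gd'_nonpos n r : 0 < r -> Gd' n r <= 0.
Proof.
  intros Hr. unfold Gd'. destruct (key r Hr n) as [[Hb1 _] [_ [Hq _]]].
  assert (0 < eb n r / r) by (apply Rdiv_lt_0_compat; lra).
  assert (0 <= Dd n r * Dd n r + 2 * Dd n r + r * eb n r * Dd n r - INR n) by nra.
  replace (- eb n r / r) with (- (eb n r / r)) by (field; lra). nra.
Qed.

Lemma G_noninc n a b : 0 < a -> a <= b -> Gd n b <= Gd n a.
Proof.
  intros Ha Hab. destruct (Rle_lt_or_eq_dec a b Hab) as [Hlt|Heq]; [|subst; lra].
  destruct (MVT_cor2 (Gd n) (Gd' n) a b Hlt) as [c [Hc1 Hc2]].
  - intros c Hc. apply der_G. lra.
  - pose proof (Gd'_nonpos n c ltac:(lra)). nra.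
Qed.

Lemma MVTc n a b : 0 < a < b -> exists c, carr n b - carr n a = Gd n c * (b - a) /\ a < c < b.
Proof.
  intros H. apply MVT_cor2. lra. intros c Hc. apply der_c. lra.
Qed.

Lemma c_concave_lt n x z t : 0 < x < z -> 0 <= t <= 1 ->
  t * carr n x + (1 - t) * carr n z <= carr n (t * x + (1 - t) * z).
Proof.
  intros Hxz Ht.
  destruct (Req_dec t 0) as [->|Ht0]. { replace (0 * x + (1 - 0) * z) with z by ring. lra. }
  destruct (Req_dec t 1) as [->|Ht1]. { replace (1 * x + (1 - 1) * z) with x by ring. lra. }
  set (m := t * x + (1 - t) * z).
  assert (Hm : x < m < z) by (unfold m; split; nra).
  destruct (MVTc n x m ltac:(lra)) as [c1 [E1 Hc1]].
  destruct (MVTc n m z ltac:(lra)) as [c2 [E2 Hc2]].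
  pose proof (G_noninc n c1 m ltac:(lra) ltac:(lra)).
  pose proof (G_noninc n m c2 ltac:(lra) ltac:(lra)).
  assert (P1 : carr n m - carr n x >= Gd n m * (m - x)) by nra.
  assert (P2 : carr n z - carr n m <= Gd n m * (z - m)) by nra.
  assert (Id : t * (m - x) = (1 - t) * (z - m)) by (unfold m; ring).
  assert (Q1 : t * (carr n m - carr n x) >= t * (Gd n m * (m - x))) by nra.
  assert (Q2 : (1 - t) * (carr n z - carr n m) <= (1 - t) * (Gd n m * (z - m))) by nra.
  assert (t * (Gd n m * (m - x)) = (1 - t) * (Gd n m * (z - m))).
  { rewrite <- !Rmult_assoc. rewrite (Rmult_comm t), (Rmult_comm (1 - t)).
    rewrite !Rmult_assoc. rewrite Id. reflexivity. }
  lra.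
Qed.

Lemma c_concave n x z t : 0 < x -> 0 < z -> 0 <= t <= 1 ->
  t * carr n x + (1 - t) * carr n z <= carr n (t * x + (1 - t) * z).
Proof.
  intros Hx Hz Ht. destruct (Rtotal_order x z) as [H|[H|H]].
  - apply c_concave_lt; lra.
  - subst. replace (t * z + (1 - t) * z) with z by ring. lra.
  - pose proof (c_concave_lt n z x (1 - t) ltac:(lra) ltac:(lra)).
    replace (t * x + (1 - t) * z) with ((1 - t) * z + (1 - (1 - t)) * x) by ring. lra.
Qed.

Lemma carr_D n r : carr n r = INR n - Dd n r.
Proof. unfold carr, Dd. ring. Qed.

Lemma carr_lower n r : 0 < r -> INR n * r / (INR n + r) <= carr n r.
Proof.
  intros Hr. destruct (key r Hr n) as [_ [_ [_ [Hu _]]]].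
  pose proof (pos_INR n). unfold carr.
  apply Rmult_le_reg_r with (INR n + r). lra.
  replace (INR n * r / (INR n + r) * (INR n + r)) with (INR n * r) by (field; lra). nra.
Qed.

Lemma G_pos n r : (0 < n)%nat -> 0 < r -> 0 < Gd n r.
Proof.
  intros Hn Hr. destruct (Rlt_le_dec 0 (Gd n r)) as [H|H]; auto. exfalso.
  destruct (key r Hr n) as [_ [_ [_ [_ HD]]]]. specialize (HD Hn).
  set (c0 := carr n r). set (K := INR n).
  assert (HK : 0 < K) by (apply lt_0_INR; lia).
  assert (Hc0 : c0 < K) by (unfold c0, K; rewrite carr_D; lra).
  assert (Hc00 : 0 <= c0).
  { unfold c0, carr. destruct (key r Hr n) as [[_ Hb] _]. nra. }
  set (z := c0 * K / (K - c0) + r + 1).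
  assert (Hz0 : 0 <= c0 * K / (K - c0)) by (unfold Rdiv; apply Rmult_le_pos; [nra| left; apply Rinv_0_lt_compat; lra]).
  assert (Hz : r < z) by (unfold z; lra).
  destruct (MVTc n r z ltac:(lra)) as [c [E Hc]].
  pose proof (G_noninc n r c Hr ltac:(lra)).
  assert (carr n z <= c0) by (unfold c0; nra).
  pose proof (carr_lower n z ltac:(lra)). fold K in H2.
  assert (K * z <= c0 * (K + z)).
  { apply Rmult_le_reg_r with (/ (K + z)). apply Rinv_0_lt_compat; lra.
    replace (c0 * (K + z) * / (K + z)) with c0 by (field; lra).
    unfold Rdiv in H2. lra. }
  assert (z * (K - c0) = c0 * K + (r + 1) * (K - c0)) by (unfold z; field; lra).
  nra.
Qed.

Lemma carr_strict n a b : (0 < n)%nat -> 0 < a < b -> carr n a < carr n b.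
Proof.
  intros Hn H. destruct (MVTc n a b H) as [c [E Hc]].
  pose proof (G_pos n c Hn ltac:(lra)). nra.
Qed.

Lemma sum_id mu c r n :
  sum_f_R0 (fun j => mu * ((INR j - c) * r ^ j / INR (fact j))) n
  = mu * (r * (Ssum n r - wk n r) - c * Ssum n r).
Proof.
  induction n.
  - unfold Ssum, wk. simpl. field.
  - rewrite tech5. rewrite IHn. rewrite S_succ.
    assert (H : r ^ S n / INR (fact (S n)) = wk (S n) r) by reflexivity.
    replace (mu * ((INR (S n) - c) * r ^ S n / INR (fact (S n))))
      with (mu * ((INR (S n) - c) * wk (S n) r)) by (rewrite <- H; field; apply not_0_INR, fact_neq_0).
    rewrite w_succ. assert (0 < INR (S n)) by (apply lt_0_INR; lia). field. lra.
Qed.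

Lemma powerRZ_m1 mu j : 0 < mu -> / powerRZ mu (Z.of_nat j - 1) = mu / mu ^ j.
Proof.
  intros Hmu. replace (Z.of_nat j - 1)%Z with (Z.of_nat j + (-1))%Z by lia.
  rewrite powerRZ_add by lra. rewrite <- pow_powerRZ. simpl.
  pose proof (pow_lt mu j Hmu). field. lra.
Qed.

Lemma Fpoly_eq k mu y u : 0 < mu -> 0 <= y ->
  Fpoly k mu y u = mu * Ssum k (y / mu) * (carr k (y / mu) - u * INR k).
Proof.
  intros Hmu Hy. unfold Fpoly.
  rewrite (sum_eq _ (fun j => mu * ((INR j - u * INR k) * (y / mu) ^ j / INR (fact j)))).
  - rewrite sum_id. unfold carr, eb.
    assert (Hp : 0 <= y / mu) by (unfold Rdiv; apply Rmult_le_pos; [lra | left; apply Rinv_0_lt_compat; lra]).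
    pose proof (S_ge1 k (y/mu) Hp). field. lra.
  - intros j _. rewrite powerRZ_m1 by lra. unfold Rdiv. rewrite Rpow_mult_distr, pow_inv.
    pose proof (pow_lt mu j Hmu). pose proof (fact_pos' j). field. lra.
Qed.

Lemma carr_cont k a : 0 < a -> continuity_pt (carr k) a.
Proof. intros Ha. apply derivable_continuous_pt. exists (Gd k a). apply der_c. exact Ha. Qed.

Lemma froot_spec k mu u : (0 < k)%nat -> 0 < mu -> 0 < u < 1 ->
  0 < froot k mu u /\ carr k (froot k mu u / mu) = u * INR k.
Proof.
  intros Hk Hmu Hu.
  set (K := INR k). assert (HK : 0 < K) by (apply lt_0_INR; lia).
  set (e := u * K / 2). assert (He : 0 < e) by (unfold e; nra).
  set (Rr := u * K / (1 - u) + 1 + e).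
  assert (HuK : 0 < u * K / (1 - u)) by (apply Rdiv_lt_0_compat; nra).
  assert (HR : e < Rr) by (unfold Rr; lra).
  assert (Hce : carr k e - u * K < 0).
  { unfold carr. destruct (key e He k) as [[Hb _] _].
    assert (0 < e * eb k e) by nra. unfold e in *. lra. }
  assert (HcR : 0 < carr k Rr - u * K).
  { pose proof (carr_lower k Rr ltac:(lra)). fold K in H.
    assert (u * K < K * Rr / (K + Rr)).
    { apply Rmult_lt_reg_r with (K + Rr). lra.
      replace (K * Rr / (K + Rr) * (K + Rr)) with (K * Rr) by (field; lra).
      assert (Rr * (1 - u) > u * K).
      { unfold Rr. replace ((u * K / (1 - u) + 1 + e) * (1 - u)) with (u * K + (1 + e) * (1 - u)) by (field; lra). nra. }
      nra. }
    lra. }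
  destruct (Ranalysis5.IVT_interv (fun r => carr k r - u * K) e Rr) as [z [Hz Hfz]].
  { intros a Ha. apply continuity_pt_minus. apply carr_cont. lra. apply continuity_pt_const. intros ? ?; reflexivity. }
  exact HR. exact Hce. exact HcR.
  assert (Hex : exists y, 0 < y /\ Fpoly k mu y u = 0).
  { exists (mu * z). split. nra. rewrite Fpoly_eq by nra.
    replace (mu * z / mu) with z by (field; lra). fold K. rewrite Hfz. ring. }
  pose proof (epsilon_spec (inhabits 0) (fun y => 0 < y /\ Fpoly k mu y u = 0) Hex) as [Hy HF].
  fold (froot k mu u) in Hy, HF.
  split. exact Hy.
  rewrite Fpoly_eq in HF by lra.
  assert (Hp : 0 <= froot k mu u / mu) by (unfold Rdiv; apply Rmult_le_pos; [lra | left; apply Rinv_0_lt_compat; lra]).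
  pose proof (S_ge1 k _ Hp).
  assert (mu * Ssum k (froot k mu u / mu) <> 0) by nra.
  apply Rmult_integral in HF as [HF|HF]. contradiction. unfold K in *. lra.
Qed.

Lemma grej_eq k mu alpha p : 0 < mu -> 0 <= froot k mu (Udem alpha p) ->
  grej k mu alpha p = mu * (froot k mu (Udem alpha p) / mu - carr k (froot k mu (Udem alpha p) / mu)).
Proof.
  intros Hmu Hy. unfold grej. cbv zeta. set (y := froot k mu (Udem alpha p)) in *.
  assert (Hp : 0 <= y / mu) by (unfold Rdiv; apply Rmult_le_pos; [lra | left; apply Rinv_0_lt_compat; lra]).
  pose proof (S_ge1 k _ Hp). pose proof (fact_pos' k).
  unfold pik, pi0, carr, eb, wk. fold (Ssum k (y / mu)). field. lra.
Qed.

Lemma mix01 ux uy t : 0 < ux < 1 -> 0 < uy < 1 -> 0 <= t <= 1 -> 0 < t * ux + (1 - t) * uy < 1.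
Proof.
  intros Hx Hy Ht. destruct (Rle_dec ux uy).
  - assert (0 <= (1 - t) * (uy - ux)) by (apply Rmult_le_pos; lra).
    assert (0 <= t * (uy - ux)) by (apply Rmult_le_pos; lra). split; nra.
  - assert (0 <= (1 - t) * (ux - uy)) by (apply Rmult_le_pos; lra).
    assert (0 <= t * (ux - uy)) by (apply Rmult_le_pos; lra). split; nra.
Qed.

Theorem theorem1 (m : nat) (k : nat -> nat) (mu alpha xbar : nat -> R)
  (hk : forall i, (i < m)%nat -> (0 < k i)%nat)
  (hmu : forall i, (i < m)%nat -> 0 < mu i)
  (halpha : forall i, (i < m)%nat -> alpha i <> 0) :
  (forall (p q : nat -> R) (t : R),
     (forall i, (i < m)%nat -> Pdom (alpha i) (p i)) ->
     (forall i, (i < m)%nat -> Pdom (alpha i) (q i)) ->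
     forall i, (i < m)%nat ->
       Udem (alpha i) (t * p i + (1 - t) * q i)
       = t * Udem (alpha i) (p i) + (1 - t) * Udem (alpha i) (q i)) /\
  (forall i, (i < m)%nat ->
     convex_set (Pdom (alpha i)) /\
     convex_on (Pdom (alpha i)) (grej (k i) (mu i) (alpha i))).
Proof.
  split.
  - intros p q t _ _ i _. unfold Udem. ring.
  - intros i Hi. specialize (hk i Hi). specialize (hmu i Hi).
    set (a := alpha i) in *. set (K := k i) in *. set (M := mu i) in *.
    assert (HU : forall x y t, Udem a (t * x + (1 - t) * y) = t * Udem a x + (1 - t) * Udem a y)
      by (intros; unfold Udem; ring).
    split.
    + intros x y t Hx Hy Ht. unfold Pdom in *. rewrite HU. apply mix01; auto.
    + intros x y t Hx Hy Ht.
      assert (Hz : Pdom a (t * x + (1 - t) * y)) by (unfold Pdom in *; rewrite HU; apply mix01; auto).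
      unfold Pdom in Hx, Hy, Hz.
      destruct (froot_spec K M _ hk hmu Hx) as [Px Cx].
      destruct (froot_spec K M _ hk hmu Hy) as [Py Cy].
      destruct (froot_spec K M _ hk hmu Hz) as [Pz Cz].
      rewrite !grej_eq by lra.
      set (r1 := froot K M (Udem a x) / M) in *.
      set (r2 := froot K M (Udem a y) / M) in *.
      set (r := froot K M (Udem a (t * x + (1 - t) * y)) / M) in *.
      assert (H1 : 0 < r1) by (apply Rdiv_lt_0_compat; lra).
      assert (H2 : 0 < r2) by (apply Rdiv_lt_0_compat; lra).
      assert (H3 : 0 < r) by (apply Rdiv_lt_0_compat; lra).
      rewrite Cx, Cy, Cz, HU.
      pose proof (c_concave K r1 r2 t H1 H2 Ht) as Hc.
      rewrite Cx, Cy in Hc. rewrite HU in Cz.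
      assert (r <= t * r1 + (1 - t) * r2).
      { destruct (Rle_lt_dec r (t * r1 + (1 - t) * r2)) as [|Hlt]; auto.
        assert (0 < t * r1 + (1 - t) * r2) by nra.
        pose proof (carr_strict K _ _ hk (conj H Hlt)). lra. }
      nra.
Qed.
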